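(* For every $m\ge 1$ and every $\alpha\in\mathbb{S}_m$, the element $\alpha-\sigma_m^{-1}\alpha\sigma_m$ of the group algebra $\mathbb{C}[\mathbb{S}_m]$ lies in the linear span of all generalized Vassiliev elements in $\mathbb{C}[\mathbb{S}_m]$. Consequently any two permutations conjugate by a power of $\sigma_m$ (i.e. any two hyper arc diagrams representing the same hyper chord diagram) are equal modulo generalized Vassiliev relations.
   Context: Permutations $\alpha\in\mathbb{S}_m$ act on $[m]=\{1,\dots,m\}$; $\sigma_m=(1,2,\dots,m)$ is the standard long cycle. A permutation $\alpha\in\mathbb{S}_m$ is called a hyper arc diagram; its cycles are called hyper edges and the elements of a cycle its legs. A hyper chord diagram is the orbit of $\alpha$ under conjugation $\alpha\mapsto\sigma_m^{-k}\alpha\sigma_m^{k}$ (cyclic shift). Generalized Vassiliev elements: let $m\ge2$, $\gamma\in\mathbb{S}_{m-1}$, and $q\in[m-1]\cup\{*\}$. For $t\in\{0,1,\dots,m-1\}$ let $\alpha_t=\alpha_t(\gamma,q)\in\mathbb{S}_m$ be obtained as follows: place the points $1,\dots,m-1$ on a line in increasing order, insert a new point $x$ (the free leg) in the gap between $t$ and $t+1$ (before $1$ if $t=0$, after $m-1$ if $t=m-1$), and relabel the $m$ points by $1,\dots,m$ in order; the permutation acts as $\gamma$ on the old points, except that if $q\neq *$ then $q\mapsto x\mapsto\gamma(q)$, and if $q=*$ then $x$ is a fixed point. For a cycle $v$ of $\gamma$ put $E(\gamma,q,v)=\sum_{j\in v}\big(\alpha_{j-1}-\alpha_j\big)\in\mathbb{C}[\mathbb{S}_m]$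 (the free leg placed immediately before a leg $j$ of $v$ with sign $+$, immediately after it with sign $-$). $E(\gamma,q,v)$ is a one-hyper-arc element if $q\ne *$ and $q\in v$, and a two-hyper-arc element otherwise. Both kinds are called generalized Vassiliev elements; a function on permutations satisfies the generalized Vassiliev relations if its linear extension vanishes on all of them. *)

(* Defs.v *)
From mathcomp Require Import all_boot all_order all_algebra all_fingroup.
From mathcomp Require Import algC.
Set Implicit Arguments. Unset Strict Implicit. Unset Printing Implicit Defensive.
Import GRing.Theory Num.Theory.
Local Open Scope ring_scope.

(* Conventions: [m] = {1,...,m} is modelled by 'I_m = {0,...,m-1} (label k <-> k-1).
   Permutations of [m] are elements of 'S_m.  MathComp composes permutations
   left-to-right: (s * t)%g x = t (s x). *)

Notation galg m := {ffun 'S_m -> algC}.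

Definition pvec (m : nat) (a : 'S_m) : galg m := [ffun b => ((b == a)%:R : algC)].

(* The standard long cycle sigma_m = (1,2,...,m): k |-> k+1 mod m. *)
Definition sigma_long (m : nat) : 'S_m := perm (can_inj (@ordSK m)).

(* alpha_t(gamma, q) in S_{n+1} (m = n+1), for t : 'I_n.+1 (t = 0..m-1).
   Old point i : 'I_n is relabelled lift t i (i.e. i if i < t, i+1 otherwise),
   and the free leg x gets the new label t.
   lift_perm t t gamma fixes t and acts as gamma on old points;
   if q = Some q0, precomposing with the transposition (lift t q0, t) yields
   lift t q0 |-> t |-> lift t (gamma q0); if q = None, x = t is a fixed point. *)
Definition alpha_t (n : nat) (gamma : 'S_n) (q : option 'I_n) (t : 'I_n.+1)
  : 'S_n.+1 :=
  match q with
  | None => lift_perm t t gamma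
  | Some q0 => (tperm (lift t q0) t * lift_perm t t gamma)%g
  end.

(* E(gamma, q, v) = sum_{j in v} (alpha_{j-1} - alpha_j), with the cycle v given
   as a set of (0-indexed) legs; for 0-indexed j, the 1-indexed gaps j-1 and j
   are the 0-indexed positions j and j+1. *)
Definition vassE (n : nat) (gamma : 'S_n) (q : option 'I_n) (v : {set 'I_n})
  : galg n.+1 :=
  \sum_(j in v) (pvec (alpha_t gamma q (inord j)) - pvec (alpha_t gamma q (inord j.+1))).

(* Generalized Vassiliev element indexed by (gamma, q, x): the cycle v of gamma
   is the one containing x (every cycle arises this way). *)
Definition vass_gen (n : nat) (i : 'S_n * option 'I_n * 'I_n) : galg n.+1 :=
  vassE i.1.1 i.1.2 (porbit i.1.1 i.2).

(* Membership in the linear span of all generalized Vassiliev elements: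
   f = sum_i c_i E_i, written coordinatewise (the ffun type has no lmod instance). *)
Definition in_vass_span (n : nat) (f : galg n.+1) : Prop :=
  exists c : 'S_n * option 'I_n * 'I_n -> algC,
    forall b : 'S_n.+1,
      f b = \sum_(i : 'S_n * option 'I_n * 'I_n) c i * vass_gen i b.

(* Main.v *)
Require Import Defs.
From mathcomp Require Import all_boot all_order all_algebra all_fingroup algC.
Set Implicit Arguments. Unset Strict Implicit. Unset Printing Implicit Defensive.
Import GRing.Theory Num.Theory.
Local Open Scope ring_scope.

Lemma avg_orbit n (g : 'S_n) (f : 'I_n -> algC) :
  \sum_(x : 'I_n) (#|porbit g x|%:R)^-1 * \sum_(j in porbit g x) f j = \sum_j f j.
Proof.
under eq_bigr do rewrite mulr_sumr.
rewrite (exchange_big_dep xpredT) //=.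
apply: eq_bigr => j _.
rewrite (eq_bigr (fun _ => (#|porbit g j|%:R)^-1 * f j)); last first.
  move=> x /= Hx.
  suff -> : porbit g x = porbit g j by [].
  by apply/eqP; rewrite eq_porbit_mem porbit_sym.
rewrite (eq_bigl (fun x => x \in porbit g j)); last by move=> x /=; rewrite porbit_sym.
rewrite sumr_const -mulrnAl -mulr_natr mulVf ?mul1r //.
by rewrite pnatr_eq0 card_porbit_neq0.
Qed.

Lemma span_alpha n (gam : 'S_n) q :
  in_vass_span (pvec (alpha_t gam q ord0) - pvec (alpha_t gam q ord_max)).
Proof.
pose c := (fun i : 'S_n * option 'I_n * 'I_n => if (i.1.1 == gam) && (i.1.2 == q) then (#|porbit gam i.2|%:R)^-1 else 0 : algC).
exists c.
move=> b.
pose F := fun i => c i * vass_gen i b.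
have -> : \sum_i c i * vass_gen i b = \sum_(u : 'S_n * option 'I_n) \sum_(x : 'I_n) F (u, x).
  by rewrite pair_big; apply: eq_bigr => -[u x].
rewrite (@bigD1 _ _ _ _ (pair gam q)) //=.
rewrite [X in _ = _ + X]big1 ?addr0; last first.
  move=> [g' q'] Hu; apply: big1 => x _; rewrite /F /c /=.
  by move: Hu; rewrite xpair_eqE => /negbTE ->; rewrite mul0r.
rewrite /F /c /= !eqxx /=.
under eq_bigr do rewrite /vass_gen /vassE /= sum_ffunE.
rewrite (avg_orbit gam (fun j : 'I_n =>
   (pvec (alpha_t gam q (inord j)) - pvec (alpha_t gam q (inord j.+1))) b)).
set u := fun k : nat => pvec (alpha_t gam q (inord k)) b.
rewrite (eq_bigr (fun j : 'I_n => - (u j.+1 - u j))); last first.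
  by move=> j _; rewrite /u !ffunE opprB.
rewrite sumrN -(big_mkord xpredT (fun k => u k.+1 - u k)) telescope_sumr //.
rewrite /u opprB !ffunE.
have -> : (inord 0 : 'I_n.+1) = ord0 by apply: val_inj; rewrite /= inordK.
by have -> : (inord n : 'I_n.+1) = ord_max by apply: val_inj; rewrite /= inordK.
Qed.
Lemma sigmaE m (x : 'I_m) : val (sigma_long m x) = (x.+1 %% m)%N.
Proof. by rewrite /sigma_long permE. Qed.

Lemma sigma_max n : sigma_long n.+1 ord_max = ord0.
Proof. by apply: val_inj; rewrite sigmaE /= modnn. Qed.

Lemma sigma_lift n (i : 'I_n) : sigma_long n.+1 (lift ord_max i) = lift ord0 i.
Proof.
apply: val_inj; rewrite sigmaE /= /bump leqNgt ltn_ord /= add0n.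
by rewrite modn_small // ltnS ltn_ord.
Qed.

Lemma decomp n (a : 'S_n.+1) : exists gam q,
  alpha_t gam q ord0 = a /\
  alpha_t gam q ord_max = (sigma_long n.+1 * a * (sigma_long n.+1)^-1)%g.
Proof.
move: ((a^-1)%g ord0) (permKV a ord0) => p Hp.
pose a' := (tperm p ord0 * a)%g.
have Ea' : a' = (tperm p ord0 * a)%g by [].
clearbody a'.
have a'0 : a' ord0 = ord0 by rewrite Ea' permM tpermR.
pose gf := fun i : 'I_n => odflt i (unlift ord0 (a' (lift ord0 i))).
have gfK : forall i, lift ord0 (gf i) = a' (lift ord0 i).
  move=> i; rewrite /gf; case: unliftP => [j ->|E] //=.
  by move: E; rewrite -{2}a'0 => /perm_inj /eqP; rewrite eq_sym (negbTE (neq_lift _ _)).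
have gf_inj : injective gf.
  by move=> i j E; apply: (@lift_inj _ ord0); apply: (@perm_inj _ a'); rewrite -!gfK E.
pose gam := perm gf_inj.
have L0 : lift_perm ord0 ord0 gam = a'.
  apply/permP => x; case: (unliftP ord0 x) => [i ->|->].
    by rewrite lift_perm_lift permE gfK.
  by rewrite lift_perm_id a'0.
have Lmx : forall x, sigma_long n.+1 (lift_perm ord_max ord_max gam x)
                     = lift_perm ord0 ord0 gam (sigma_long n.+1 x).
  move=> x; case: (unliftP ord_max x) => [i ->|->].
    by rewrite lift_perm_lift !sigma_lift lift_perm_lift.
  by rewrite !lift_perm_id sigma_max lift_perm_id.
have Lmax : lift_perm ord_max ord_max gam
            = (sigma_long n.+1 * a' * (sigma_long n.+1)^-1)%g.
  apply/permP => x; rewrite !permM -L0 -Lmx.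
  by rewrite permK.
exists gam, (unlift ord0 p).
case: (unliftP ord0 p) => [q0 Ep|Ep] /=.
  split.
    by rewrite L0 Ea' -Ep mulgA tperm2 mul1g.
  have HT : (sigma_long n.+1 * tperm p ord0 * (sigma_long n.+1)^-1)%g
            = tperm (lift ord_max q0) ord_max.
    rewrite -mulgA -[X in (X * _)%g](invgK (sigma_long n.+1)) -conjgE tpermJ.
    by rewrite Ep -sigma_lift permK -sigma_max permK.
  rewrite Lmax -HT Ea' !mulgA mulgKV.
  by rewrite -(mulgA (sigma_long n.+1)) tperm2 mulg1.
rewrite L0 Lmax Ea' Ep tperm1 mul1g.
by [].
Qed.

Lemma span_add n (f g : galg n.+1) :
  in_vass_span f -> in_vass_span g -> in_vass_span (f + g).
Proof.
move=> [c1 H1] [c2 H2]; exists (fun i => c1 i + c2 i) => b.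
rewrite ffunE H1 H2 -big_split /=.
by apply: eq_bigr => i _; rewrite mulrDl.
Qed.

Lemma span0 n : in_vass_span (0 : galg n.+1).
Proof.
exists (fun _ => 0) => b; rewrite ffunE big1 // => i _; by rewrite mul0r.
Qed.

Lemma part1 n (a : 'S_n.+1) :
  in_vass_span (pvec a - pvec (sigma_long n.+1 * a * (sigma_long n.+1)^-1)%g).
Proof.
have [gam [q [E0 E1]]] := decomp a.
by rewrite -E1 -{1}E0; apply: span_alpha.
Qed.

Theorem lemma1 (n : nat) (a : 'S_n.+1) :
  in_vass_span (pvec a - pvec (sigma_long n.+1 * a * (sigma_long n.+1)^-1)%g)
  /\ (forall k : nat,
        in_vass_span (pvec a - pvec ((sigma_long n.+1 ^+ k) * a
                                        * (sigma_long n.+1 ^+ k)^-1)%g)).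
Proof.
split; first exact: part1.
elim=> [|k IH].
  by rewrite expg0 mul1g invg1 mulg1 subrr; apply: span0.
set s := sigma_long n.+1.
have -> : (s ^+ k.+1 * a * (s ^+ k.+1)^-1)%g
          = (s * (s ^+ k * a * (s ^+ k)^-1) * s^-1)%g.
  by rewrite expgS invMg !mulgA.
set b := (s ^+ k * a * (s ^+ k)^-1)%g in IH *.
have -> : pvec a - pvec (s * b * s^-1)%g
          = (pvec a - pvec b) + (pvec b - pvec (s * b * s^-1)%g).
  by rewrite addrA subrK.
by apply: span_add => //; apply: part1.
Qed.
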